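(* Let $r\ge 2$ be an integer and let $H$ be a graph that admits a proper $r$-colouring whose colour classes have sizes $\ell_1\ge \ell_2\ge\dots\ge \ell_r>0$. Let $x\in\left(0,\frac{1}{|V(H)|}\right)$, let $n$ be a positive integer, and set $\delta:=(r-2+x\ell_r)\frac{n}{r-1}$. Then every $n$-vertex graph $G$ with at least $(r-2+x|V(H)|)\frac{n}{r-1}$ vertices of degree at least $\delta$ has fractional hom$_H$-cover number at least $xn$.
   Context: Let $G^H$ denote the set of all graph homomorphisms $h:H\to G$, i.e. maps $h:V(H)\to V(G)$ such that $uv\in E(H)$ implies $h(u)h(v)\in E(G)$. A fractional hom$_H$-cover of $G$ is a function $c:V(G)\to[0,1]$ such that for every homomorphism $h\in G^H$, $\sum_{v\in V(G)} c(v)\,|h^{-1}(v)|\ge 1$; its size is $\sum_{v\in V(G)}c(v)$. The fractional hom$_H$-cover number of $G$ is the minimum size of a fractional hom$_H$-cover of $G$. *)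

(* Defs.v *)
From HB Require Import structures.
From mathcomp Require Import all_boot all_order all_algebra.
Set Implicit Arguments. Unset Strict Implicit. Unset Printing Implicit Defensive.
Import Order.TTheory GRing.Theory Num.Theory.
Local Open Scope ring_scope.

(* A (finite, undirected) graph is given by a vertex finType V and an
   adjacency relation e : rel V; simple graphs have e symmetric and irreflexive. *)

Definition is_hom (VH VG : finType) (eH : rel VH) (eG : rel VG) (h : VH -> VG) : Prop :=
  forall u v : VH, eH u v -> eG (h u) (h v).

Definition deg (VG : finType) (eG : rel VG) (v : VG) : nat := #|[set w | eG v w]|.

Definition proper_colouring (VH : finType) (eH : rel VH) (r : nat) (col : VH -> 'I_r) : Prop :=
  forall u v : VH, eH u v -> col u != col v.

Definition frac_hom_cover (R : realFieldType) (VH VG : finType) (eH : rel VH) (eG : rel VG)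
    (c : VG -> R) : Prop :=
  (forall v, 0 <= c v <= 1) /\
  forall h : VH -> VG, is_hom eH eG h ->
    1 <= \sum_(v : VG) c v * (#|[set u | h u == v]|)%:R.

Definition cover_size (R : realFieldType) (VG : finType) (c : VG -> R) : R :=
  \sum_(v : VG) c v.

(* Main.v *)
Require Import Defs.
From HB Require Import structures.
From mathcomp Require Import all_boot all_order all_algebra.
From mathcomp Require Import ring lra.
Import Order.TTheory GRing.Theory Num.Theory.
Local Open Scope ring_scope.


Lemma card_inter_lb (V : finType) (A B : {set V}) :
  (#|A| <= #|A :&: B| + (#|V| - #|B|))%N.
Proof.
rewrite -(cardsID B A) leq_add2l.
have -> : (#|V| - #|B| = #|~: B|)%N by rewrite -(cardsC B) addKn.
by apply: subset_leq_card; rewrite setDE subsetIr.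
Qed.

Lemma card_common (V : finType) (e : rel V) (A : {set V}) (Q : seq V) :
  (#|A| <= #|[set v in A | all (fun q => e q v) Q]|
          + \sum_(q <- Q) (#|V| - #|[set w | e q w]|))%N.
Proof.
elim: Q => [|q Q IH].
  by rewrite big_nil addn0; apply: subset_leq_card; apply/subsetP => v vA; rewrite inE vA.
rewrite big_cons; apply: (leq_trans IH).
idtac.
rewrite addnA leq_add2r.
set S := [set v in A | _].
have -> : [set v in A | all (fun q0 => e q0 v) (q :: Q)] = S :&: [set w | e q w].
  apply/setP => v; rewrite !inE /=; case: (v \in A); case: (e q v); by case: (all _ _).
exact: card_inter_lb.
Qed.

Lemma exists_min (V : finType) (R : realFieldType) (c : V -> R) (S : {set V}) :
  (0 < #|S|)%N -> exists2 v, v \in S & forall u, u \in S -> c v <= c u.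
Proof.
case/card_gt0P => v0 v0S.
case: (arg_minP c v0S) => v vS H; exists v => // u uS; exact: H.
Qed.


Lemma sum_hom_eq (VH VG : finType) (R : realFieldType) (c : VG -> R) (h : VH -> VG) :
  \sum_(v : VG) c v * (#|[set u | h u == v]|)%:R = \sum_(u : VH) c (h u).
Proof.
rewrite (partition_big h xpredT) //=; apply: eq_bigr => v _.
rewrite cardsE -sum1_card natr_sum mulr_sumr.
by apply: eq_big => [u|u /eqP ->]; rewrite ?mulr1.
Qed.

Lemma avg_constraint (R : realFieldType) (s : nat) (VH VG : finType) (eH : rel VH)
  (eG : rel VG) (eG_sym: symmetric eG) (col : VH -> 'I_(s.+2))
  (hcol : proper_colouring eH col) (i0 : 'I_(s.+2)) (c : VG -> R)
  (hcov : forall h, is_hom eH eG h -> 1 <= \sum_v c v * (#|[set u | h u == v]|)%:R)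
  (q : 'I_(s.+1) -> VG) (hq : forall a b, a != b -> eG (q a) (q b))
  (w : VG) (hw : forall a, eG (q a) w) :
  (s.+1)%:R <= (#|VH| - #|[set u | col u == i0]|)%:R * (\sum_a c (q a))
               + (s.+1)%:R * (#|[set u | col u == i0]|)%:R * c w.
Proof.
pose h (t : 'I_(s.+1)) (u : VH) :=
  match unlift i0 (col u) with None => w | Some p => q (p + t)%R end.
have hom t : is_hom eH eG (h t).
  move=> u v huv; have := hcol _ _ huv; rewrite /h.
  case: unliftP => [p ->|->]; case: unliftP => [p' ->|->] //.
  - rewrite (inj_eq lift_inj) => np; apply: hq.
    by apply: contra np => /eqP /addIr ->.
  - by move=> _; rewrite eG_sym.
  - by rewrite eqxx.
have H1 : (s.+1)%:R <= \sum_(t : 'I_(s.+1)) \sum_(u : VH) c (h t u).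
  have -> : (s.+1)%:R = \sum_(t : 'I_(s.+1)) (1 : R).
    by rewrite sumr_const card_ord.
  by apply: ler_sum => t _; rewrite -sum_hom_eq; exact: hcov.
apply: (le_trans H1); rewrite exchange_big /=.
rewrite (bigID (fun u => col u == i0)) /= addrC.
rewrite le_eqVlt; apply/orP; left; apply/eqP; congr (_ + _).
  transitivity (\sum_(u | col u != i0) \sum_a c (q a)).
    apply: eq_bigr => u /negbTE cu; rewrite /h.
    case: unliftP cu => [p ->|->]; last by rewrite eqxx.
    move=> _; symmetry; exact: (reindex_inj (addrI p)).
  rewrite sumr_const mulr_natl; congr (_ *+ _).
  rewrite -(cardsC [set u | col u == i0]) addKn -cardsE; apply: eq_card => u; by rewrite !inE.
transitivity (\sum_(u | col u == i0) ((s.+1)%:R * c w)).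
  apply: eq_bigr => u /eqP cu; rewrite /h cu unlift_none.
  by rewrite sumr_const card_ord mulr_natl.
rewrite sumr_const cardsE -mulr_natr; ring.
Qed.


Definition SQ (VG : finType) (eG : rel VG) (D : {set VG}) (Q : seq VG) : {set VG} :=
  [set v in D | all (fun q => eG q v) Q].
Arguments SQ {VG}.

Definition PhiQ (R : realFieldType) (VG : finType) (eG : rel VG) (D : {set VG})
  (c : VG -> R) (Q : seq VG) (m : R) : R :=
  \sum_(v in D) (if v \in SQ eG D Q then m else c v).
Arguments PhiQ {R VG}.

Definition cliqueQ (VG : finType) (eG : rel VG) (Q : seq VG) :=
  forall a b, a \in Q -> b \in Q -> a != b -> eG a b.
Arguments cliqueQ {VG}.

Lemma greedy (R : realFieldType) (VG : finType) (eG : rel VG) (eG_sym : symmetric eG)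
  (eG_irr : irreflexive eG) (c : VG -> R) (hc0 : forall v, 0 <= c v) (D : {set VG})
  (al be : R) (hal : 0 < al) (hbe : 0 <= be) (r' : nat)
  (hS : forall Q : seq VG, all (mem D) Q -> (size Q < r')%N ->
        al + be * (r' - size Q)%:R <= (#|SQ eG D Q|)%:R) :
  forall j, (j <= r')%N -> exists Q m, [/\ size Q = j, uniq Q, all (mem D) Q, cliqueQ eG Q &
     [/\ 0 <= m, (forall v, v \in SQ eG D Q -> m <= c v) &
     al * m + be * (\sum_(q <- Q) c q + (r' - j)%:R * m) <= PhiQ eG D c Q m]].
Proof.
elim=> [_|j IH hj].
  exists [::], 0; split => //; try by move=> a b.
  split => //; try by move=> v _; exact: hc0.
  rewrite /PhiQ big_nil !mulr0 ?add0r ?addr0 ?mulr0.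
  rewrite big1 // => v vD; suff -> : v \in SQ eG D [::] by [].
  by rewrite inE vD.
have [Q [m [sQ uQ aQ cQ [m0 mc Hinv]]]] := IH (ltnW hj).
have hSQ := hS Q aQ ltac:(by rewrite sQ).
have pos : (0 < #|SQ eG D Q|)%N.
  rewrite -(ltr0n R); apply: lt_le_trans hSQ.
  have : 0 <= be * (r' - size Q)%:R by apply: mulr_ge0.
  lra.
have [qs qsS qmin] := @exists_min _ _ c _ pos.
have qsD : qs \in D by move: qsS; rewrite inE => /andP [].
have qadj : forall q, q \in Q -> eG q qs.
  by move=> q qQ; move: qsS; rewrite inE => /andP [_ /allP]; apply.
have sub : forall v, v \in SQ eG D (qs :: Q) -> v \in SQ eG D Q.
  by move=> v; rewrite !inE /= => /and3P [-> _ ->].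
exists (qs :: Q), (c qs); split.
- by rewrite /= sQ.
- rewrite /= uQ andbT; apply/negP => qsQ.
  by have := qadj _ qsQ; rewrite eG_irr.
- by rewrite /= aQ andbT.
- move=> a b; rewrite !inE => /orP [/eqP ->|aQ'] /orP [/eqP ->|bQ'].
  + by rewrite eqxx.
  + by move=> _; rewrite eG_sym; apply: qadj.
  + by move=> _; apply: qadj.
  + exact: cQ.
split.
- exact: hc0.
- by move=> v /sub; exact: qmin.
have mm : m <= c qs by apply: mc.
have step : PhiQ eG D c Q m + (c qs - m) * (#|SQ eG D Q|)%:R <= PhiQ eG D c (qs :: Q) (c qs).
  have -> : (c qs - m) * (#|SQ eG D Q|)%:R
      = \sum_(v in D) (if v \in SQ eG D Q then c qs - m else 0).
    rewrite -big_mkcondr /= sumr_const mulr_natr; congr (_ *+ _).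
    apply: eq_card => v; rewrite !inE.
    rewrite -!topredE /= !inE andbA andbb; done.
  rewrite /PhiQ -big_split /=; apply: ler_sum => v vD.
  case E': (v \in SQ eG D (qs :: Q)).
    by rewrite (sub _ E'); rewrite addrC subrK.
  case E: (v \in SQ eG D Q); last by rewrite addr0.
  by rewrite addrC subrK; apply: qmin.
have e : (r' - j)%:R = (r' - j.+1)%:R + 1 :> R.
  by rewrite -(subnSK hj) -addn1 natrD.
rewrite big_cons /=.
apply: le_trans step.
have hb : (c qs - m) * (al + be * (r' - j)%:R) <= (c qs - m) * (#|SQ eG D Q|)%:R.
  apply: ler_wpM2l; first by rewrite subr_ge0.
  by rewrite -sQ.
rewrite e in hb Hinv.
set A := (r' - j.+1)%:R in hb Hinv *.
set s := \sum_(q <- Q) c q in Hinv *.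
set P := PhiQ _ _ _ _ _ in Hinv *.
set N := (#|SQ eG D Q|)%:R in hb *.
lra.
Qed.

Lemma sum_seq_le (R : realFieldType) (V : eqType) (P : pred V) (f : V -> R) (b : R)
  (Q : seq V) : all P Q -> (forall q, P q -> f q <= b) ->
  \sum_(q <- Q) f q <= (size Q)%:R * b.
Proof.
move=> aQ hb; elim: Q aQ => [|q Q IH] /=; first by rewrite big_nil mul0r.
case/andP => Pq aQ; rewrite big_cons -addn1 natrD mulrDl mul1r addrC.
by apply: lerD; [exact: IH | exact: hb].
Qed.

Lemma final_sum (R : realFieldType) (VG : finType) (c : VG -> R) (hc0 : forall v, 0 <= c v)
  (D N S : {set VG}) (m t : R) (hS : forall v, (v \in S) = (v \in D) && (v \in N))
  (h1 : forall v, v \in S -> m + t <= c v) (h2 : forall v, v \in N -> t <= c v) :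
  \sum_(v in D) (if v \in S then m else c v) + t * (#|N|)%:R <= \sum_v c v.
Proof.
have -> : t * (#|N|)%:R = \sum_v (if v \in N then t else 0).
  by rewrite -big_mkcond /= sumr_const mulr_natr.
rewrite big_mkcond /= -big_split /=; apply: ler_sum => v _.
case vD: (v \in D); case vN: (v \in N).
- by rewrite hS vD vN; apply: h1; rewrite hS vD vN.
- by rewrite hS vD vN addr0.
- by rewrite add0r; apply: h2.
- by rewrite addr0.
Qed.

Theorem proposition2p8
  (R : realFieldType) (r : nat) (hr : (2 <= r)%N)
  (VH : finType) (eH : rel VH) (eH_sym : symmetric eH) (eH_irr : irreflexive eH)
  (col : VH -> 'I_r) (hcol : proper_colouring eH col)
  (lr : nat) (hlr_pos : (0 < lr)%N)
  (hlr_class : exists i : 'I_r, #|[set u | col u == i]| = lr)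
  (hlr_min : forall i : 'I_r, (lr <= #|[set u | col u == i]|)%N)
  (x : R) (hx0 : 0 < x) (hx1 : x < 1 / (#|VH|)%:R)
  (n : nat) (hn : (0 < n)%N)
  (VG : finType) (eG : rel VG) (eG_sym : symmetric eG) (eG_irr : irreflexive eG)
  (hVG : #|VG| = n)
  (hdeg : (r%:R - 2 + x * (#|VH|)%:R) * n%:R / (r%:R - 1)
          <= (#|[set v : VG | (r%:R - 2 + x * lr%:R) * n%:R / (r%:R - 1) <= (deg eG v)%:R]|)%:R)
  (c : VG -> R) (hc : frac_hom_cover eH eG c) :
  x * n%:R <= cover_size c.
Proof.
case: hc => hc01 hcov.
have hc0 : forall v, 0 <= c v by move=> v; case/andP: (hc01 v).
case: r hr col hcol hlr_class hlr_min hdeg => [|[|s]] // _ col hcol hlr_class hlr_min hdeg.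
set k := #|VH| in hx1 hdeg *.
have [i0 hi0] := hlr_class.
have lrk : (lr <= k)%N by rewrite -hi0; apply: max_card.
have kpos : (0 < k)%N := leq_trans hlr_pos lrk.
set rr : R := (s.+1)%:R.
have rrpos : 0 < rr by rewrite ltr0n.
have er : (s.+2)%:R = rr + 1 :> R by rewrite -[s.+2]addn1 natrD.
rewrite er in hdeg.
have e1 : rr + 1 - 1 = rr by ring.
have e2 : rr + 1 - 2 = rr - 1 by ring.
rewrite e1 e2 in hdeg.
set nn : R := n%:R in hdeg *.
set kk : R := k%:R in hx1 hdeg *.
set ll : R := lr%:R in hdeg *.
have llpos : 0 < ll by rewrite ltr0n.
have kkpos : 0 < kk by rewrite ltr0n.
have llkk : ll <= kk by rewrite ler_nat.
have nnpos : 0 < nn by rewrite ltr0n.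
have xk : x * kk < 1.
  by move: hx1; rewrite ltr_pdivlMr // mul1r.
set delta := (rr - 1 + x * ll) * nn / rr in hdeg.
set D := [set v : VG | delta <= (deg eG v)%:R] in hdeg.
set L := (kk - ll) / rr.
have Lge0 : 0 <= L by apply: divr_ge0; [rewrite subr_ge0 | exact: ltW].
set al := x * ll * nn.
set be := x * nn * L.
have alpos : 0 < al by rewrite !mulr_gt0.
have bege0 : 0 <= be by rewrite mulr_ge0 // mulr_ge0 // ltW.
have sumb : forall Q : seq VG, all (mem D) Q ->
    \sum_(q <- Q) ((#|VG| - #|[set w | eG q w]|)%N)%:R <= (size Q)%:R * (nn - delta).
  move=> Q aQ; apply: (@sum_seq_le R VG (mem D)) => // q qD.
  rewrite natrB; last by apply: max_card.
  rewrite hVG lerD2l lerN2.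
  by move: qD; rewrite /= inE.
have hSQ : forall Q : seq VG, all (mem D) Q -> (size Q < s.+1)%N ->
    al + be * (s.+1 - size Q)%:R <= (#|SQ eG D Q|)%:R.
  move=> Q aQ sQ.
  have := @card_common _ eG D Q; rewrite -(ler_nat R) natrD natr_sum => h1.
  have h2 := sumb Q aQ.
  rewrite natrB; last exact: ltnW.
  have hj : (size Q)%:R + 1 <= rr by rewrite natr1 ler_nat.
  set jj := (size Q)%:R in h2 hj *.
  have iden : (rr - 1 + x * kk) * nn / rr - jj * (nn - delta) - al - be * (rr - jj)
      = (rr - 1 - jj) * (1 - x * kk) * nn / rr.
    rewrite /delta /al /be /L; field; by rewrite addrC natr1 pnatr_eq0.
  have pos : 0 <= (rr - 1 - jj) * (1 - x * kk) * nn / rr.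
    apply: divr_ge0; last exact: ltW.
    apply: mulr_ge0; last exact: ltW.
    apply: mulr_ge0; first (move: hj; rewrite -/jj; lra).
    by rewrite subr_ge0 ltW.
  rewrite /SQ -/rr.
  move: h1 h2 iden pos hdeg.
  set S1 := \sum_(i <- Q) _.
  set P1 := (rr - 1 - jj) * _ * _ / _.
  set P2 := (rr - 1 + x * kk) * nn / rr.
  set P3 := jj * _. set P4 := be * _.
  set C1 := #|D|%:R. set C2 := #|[set v in D | _]|%:R. lra.
have [Q [m [sQ uQ aQ cQ [m0 mc Hinv]]]] :=
  @greedy R VG eG eG_sym eG_irr c hc0 D al be alpos bege0 s.+1 hSQ s.+1 (leqnn _).
rewrite subnn mul0r addr0 in Hinv.
set sig := \sum_(q <- Q) c q in Hinv.
set N := [set w | all (fun q => eG q w) Q].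
have hN : al <= (#|N|)%:R.
  have := @card_common _ eG [set: VG] Q; rewrite -(ler_nat R) natrD natr_sum cardsT => h1.
  have h2 := sumb Q aQ.
  rewrite sQ -/rr hVG in h2.
  have eN : [set v in [set: VG] | all (eG^~ v) Q] = N by apply/setP => v; rewrite !inE.
  rewrite eN hVG -/nn in h1.
  have iden : nn - rr * (nn - delta) = al.
    rewrite /delta /al; field; by rewrite addrC natr1 pnatr_eq0.
  move: h1 h2 iden; set S1 := \sum_(i <- Q) _; set P := rr * _; lra.
have hM : forall w, w \in N -> 1 - L * sig <= ll * c w.
  move=> w; rewrite inE => /allP wN.
  have hq : forall a b : 'I_s.+1, a != b -> eG (nth w Q a) (nth w Q b).
    move=> a b ab; apply: cQ; rewrite ?mem_nth ?sQ //.
    by rewrite nth_uniq ?sQ.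
  have hw : forall a : 'I_s.+1, eG (nth w Q a) w.
    by move=> a; apply: wN; rewrite mem_nth ?sQ.
  have := @avg_constraint R s VH VG eH eG eG_sym col hcol i0 c hcov
    (fun a => nth w Q a) hq w hw.
  rewrite hi0 natrB // -/kk -/ll -/rr.
  have -> : \sum_(a < s.+1) c (nth w Q a) = sig.
    by rewrite /sig (big_nth w) sQ big_mkord.
  move=> h.
  rewrite -(ler_pM2l rrpos).
  have -> : rr * (1 - L * sig) = rr - (kk - ll) * sig.
    rewrite /L; field; by rewrite addrC natr1 pnatr_eq0.
  move: h; set P1 := (kk - ll) * sig; set P2 := rr * ll * c w; set P3 := rr * (ll * c w).
  have : P2 = P3 by rewrite /P2 /P3 mulrA.
  lra.
set M := (1 - L * sig) / ll.
have hMc : forall w, w \in N -> M <= c w.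
  by move=> w wN; rewrite /M ler_pdivrMr // [c w * _]mulrC; apply: hM.
have hS : forall v, (v \in SQ eG D Q) = (v \in D) && (v \in N).
  by move=> v; rewrite !inE.
have idx : al * M + be * sig = x * nn.
  rewrite /al /M /be /L; field.
  by rewrite addrC natr1 !pnatr_eq0 /= -lt0n hlr_pos.
rewrite /cover_size.
case: (leP M m) => hMm.
  have := @final_sum R VG c hc0 D N (SQ eG D Q) m 0 hS.
  rewrite addr0 mul0r addr0 => h.
  have h' := h (fun v vS => mc v vS) (fun v _ => hc0 v).
  have : al * M <= al * m by apply: ler_wpM2l => //; exact: ltW.
  move: Hinv h' idx; rewrite /PhiQ.
  set P := \sum_(v in D) _; set A1 := al * M; set A2 := al * m; set B := be * sig.
  lra.
have := @final_sum R VG c hc0 D N (SQ eG D Q) m (M - m) hS.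
have h1 : forall v, v \in SQ eG D Q -> m + (M - m) <= c v.
  move=> v; rewrite hS => /andP [_ vN]; rewrite addrC subrK; exact: hMc.
have h2 : forall v, v \in N -> M - m <= c v.
  move=> v vN; have := hMc v vN; lra.
move=> /(_ h1 h2) h.
have : (M - m) * al <= (M - m) * (#|N|)%:R by apply: ler_wpM2l => //; rewrite subr_ge0 ltW.
move: Hinv h idx; rewrite /PhiQ.
set P := \sum_(v in D) _; set A1 := al * M; set A2 := al * m; set B := be * sig.
set T1 := (M - m) * al; set T2 := (M - m) * _.
have : T1 = A1 - A2 by rewrite /T1 /A1 /A2; ring.
lra.
Qed.
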